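(* Let $n\geqslant 4$ and let $S$ be an independent set of vertices of the split-star $S_n^2$. (1) If $|S|=2$, then $|N(S)|\geqslant 4n-8$. (2) If $|S|=3$, then $|N(S)|\geqslant 6n-14$. (3) If $|S|=4$, then $|N(S)|\geqslant 8n-20$.
   Context: For $n\geqslant 3$, permutations $p=p_1\cdots p_n$ of $\{1,\dots,n\}$ are written as words; $\mathcal S_n$ is the set of all permutations. $p\,\mathrm{g}_{12}$ swaps the symbols at positions $1$ and $2$. For $3\leqslant i\leqslant n$, $p\,\mathrm{g}_i^+$ is obtained from $p$ by placing $p_i,p_1,p_2$ at positions $1,2,i$ respectively (others unchanged), and $p\,\mathrm{g}_i^-$ by placing $p_2,p_i,p_1$ at positions $1,2,i$. The split-star $S_n^2$ has vertex set $\mathcal S_n$, with $p,q$ adjacent iff $q=p\mathrm{g}_{12}$ or $q\in\{p\mathrm{g}_i^+,p\mathrm{g}_i^-\}$ for some $i\in\{3,\dots,n\}$. For a vertex set $S$, $N(S)$ is the set of vertices not in $S$ adjacent to at least one vertex of $S$. *)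

(* Defs.v *)
From mathcomp Require Import all_boot all_fingroup.
Set Implicit Arguments. Unset Strict Implicit. Unset Printing Implicit Defensive.

(* A permutation p of {1,..,n} is modelled as p : {perm 'I_n}; its word is
   p_1 ... p_n where (0-indexed) position k holds symbol p k.  Symbols and
   positions are shifted by -1 (0..n-1 instead of 1..n). *)
Definition word (n : nat) (p : {perm 'I_n}) : seq nat :=
  [seq val (p i) | i <- enum 'I_n].

(* p g12 : swap the symbols at positions 1 and 2 (0-indexed 0 and 1). *)
Definition g12 (s : seq nat) : seq nat :=
  mkseq (fun k => nth 0 s (if k == 0 then 1 else if k == 1 then 0 else k)) (size s).

(* p g_i^+ : put p_i, p_1, p_2 at positions 1, 2, i  (0-indexed: i, 0, 1 at 0, 1, i). *)
Definition gplus (i : nat) (s : seq nat) : seq nat :=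
  mkseq (fun k => nth 0 s (if k == 0 then i else if k == 1 then 0
                           else if k == i then 1 else k)) (size s).

(* p g_i^- : put p_2, p_i, p_1 at positions 1, 2, i  (0-indexed: 1, i, 0 at 0, 1, i). *)
Definition gminus (i : nat) (s : seq nat) : seq nat :=
  mkseq (fun k => nth 0 s (if k == 0 then 1 else if k == 1 then i
                           else if k == i then 0 else k)) (size s).

Definition splitstar_adj (n : nat) (p q : {perm 'I_n}) : bool :=
  (word q == g12 (word p)) ||
  [exists i : 'I_n, (2 <= val i) &&
     ((word q == gplus (val i) (word p)) || (word q == gminus (val i) (word p)))].

Definition independent (n : nat) (S : {set {perm 'I_n}}) : bool :=
  [forall p in S, forall q in S, ~~ splitstar_adj p q].

Definition nbhd (n : nat) (S : {set {perm 'I_n}}) : {set {perm 'I_n}} :=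
  [set q | (q \notin S) && [exists p in S, splitstar_adj p q]].

(* Main.v *)
Require Import Defs.
From mathcomp Require Import all_boot all_fingroup.
Set Implicit Arguments. Unset Strict Implicit. Unset Printing Implicit Defensive.

Section S.
Variable m : nat.
Local Notation n := m.+2.
Local Notation P := {perm 'I_n}.
Local Open Scope group_scope.

Definition o0 : 'I_n := ord0.
Definition o1 : 'I_n := @Ordinal n 1 isT.
Definition t : P := tperm o0 o1.
Definition cp (i : 'I_n) : P := tperm o0 i * t.
Definition cm (i : 'I_n) : P := t * tperm o0 i.
Definition I2 := [set i : 'I_n | 1 < i].
Definition G : {set P} := t |: ([set cp i | i in I2] :|: [set cm i | i in I2]).

Lemma o01 : o0 != o1. Proof. by []. Qed.
Lemma ne0 (i : 'I_n) : 1 < i -> o0 != i.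
Proof. by move=> h; apply/eqP=> e; rewrite -e in h. Qed.
Lemma ne1 (i : 'I_n) : 1 < i -> o1 != i.
Proof. by move=> h; apply/eqP=> e; rewrite -e in h. Qed.

Lemma word_nth (p : P) (k : 'I_n) : nth 0 (word p) k = p k.
Proof.
by rewrite /word (nth_map k) ?size_enum_ord ?ltn_ord // nth_ord_enum.
Qed.

Lemma size_word (p : P) : size (word p) = n.
Proof. by rewrite size_map size_enum_ord. Qed.

Lemma word_map (p q a : P) (F : nat -> nat) :
  (forall k : 'I_n, F k = a k) ->
  (word q == mkseq (fun k => nth 0 (word p) (F k)) (size (word p))) = (q == a * p).
Proof.
move=> hF; apply/eqP/eqP.
- move=> H; apply/permP => k; rewrite permM; apply: val_inj => /=.
  have := congr1 (nth 0 ^~ k) H.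
  by rewrite nth_mkseq ?size_word ?ltn_ord // hF !word_nth.
- move=> ->; apply: (@eq_from_nth _ 0); first by rewrite size_mkseq !size_word.
  move=> k; rewrite size_word => hk.
  rewrite nth_mkseq ?size_word // -[k]/(nat_of_ord (Ordinal hk)) hF !word_nth.
  by rewrite permM.
Qed.

Lemma tv (k : 'I_n) : nat_of_ord (t k) = if nat_of_ord k == 0%N then 1%N else if nat_of_ord k == 1%N then 0%N else nat_of_ord k.
Proof. by rewrite /t permE /=; case: k => [[|[|k]] hk]. Qed.

Definition Fp (i k : nat) := if k == 0%N then i else if k == 1%N then 0%N else if k == i then 1%N else k.
Definition Fm (i k : nat) := if k == 0%N then 1%N else if k == 1%N then i else if k == i then 0%N else k.

Lemma cpv (i k : 'I_n) : 1 < i -> nat_of_ord (cp i k) = Fp i k.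
Proof.
move=> hi; rewrite /cp permM tv permE /= /Fp.
case: k => [[|[|k]] hk] /=.
- by case: i hi => [[|[|i]] ?].
- rewrite -[_ == i]/(1 == nat_of_ord i)%N. by case: i hi => [[|[|i]] ?].
- case: (Ordinal hk =P i) => [<-|ne] /=; first by rewrite eqxx.
  case: eqP => // e; case: ne; exact: val_inj.
Qed.

Lemma cmv (i k : 'I_n) : 1 < i -> nat_of_ord (cm i k) = Fm i k.
Proof.
move=> hi; rewrite /cm /t permM !permE /= /Fm.
case: k => [[|[|k]] hk] /=.
- by case: i hi => [[|[|i]] ?].
- by case: i hi => [[|[|i]] ?].
- case: (Ordinal hk =P i) => [<-|ne] /=; first by rewrite ?eqxx.
  case: eqP => // e; case: ne; exact: val_inj.
Qed.

Lemma adj12 (p q : P) : (word q == g12 (word p)) = (q == t * p).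
Proof. exact: (word_map p q (fun k => esym (tv k))). Qed.
Lemma adjp (p q : P) (i : 'I_n) : 1 < i -> (word q == gplus i (word p)) = (q == cp i * p).
Proof. move=> hi; exact: (word_map p q (fun k => esym (cpv k hi))). Qed.
Lemma adjm (p q : P) (i : 'I_n) : 1 < i -> (word q == gminus i (word p)) = (q == cm i * p).
Proof. move=> hi; exact: (word_map p q (fun k => esym (cmv k hi))). Qed.

Lemma eqmV (q p a : P) : (q * p^-1 == a) = (q == a * p).
Proof. by apply/eqP/eqP => [<-|->]; rewrite ?mulgKV ?mulgK. Qed.

Lemma adjE (p q : P) : splitstar_adj p q = (q * p^-1 \in G).
Proof.
rewrite /splitstar_adj adj12 /G !inE eqmV; congr (_ || _).
apply/existsP/orP.
- case=> i /andP [hi]; rewrite (adjp _ _ hi) (adjm _ _ hi) => /orP [] /eqP e.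
  + by left; apply/imsetP; exists i; rewrite ?inE // e mulgK.
  + by right; apply/imsetP; exists i; rewrite ?inE // e mulgK.
- case=> /imsetP [i]; rewrite inE => hi e; exists i; rewrite hi /= (adjp _ _ hi) (adjm _ _ hi).
  + by rewrite -e mulgKV eqxx.
  + by rewrite -e mulgKV eqxx orbT.
Qed.
Implicit Types (i j k p q r s z : 'I_n) (a b d e g u v w x y : P).

Lemma ltn2 (z : 'I_n) : (z != o0) -> (z != o1) -> 1 < z.
Proof. by case: z => [[|[|z]] ?]. Qed.

Section Vals.
Variable i : 'I_n.
Hypothesis hi : 1 < i.
Lemma cp0 : cp i o0 = i. Proof. by apply: ord_inj; rewrite cpv. Qed.
Lemma cp1 : cp i o1 = o0. Proof. by apply: ord_inj; rewrite cpv. Qed.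
Lemma cpi : cp i i = o1. Proof. by apply: ord_inj; rewrite cpv // /Fp eqxx; case: (nat_of_ord i) hi => [|[|]]. Qed.
Lemma cpz z : z != o0 -> z != o1 -> z != i -> cp i z = z.
Proof. by move=> h0 h1 h2; apply: ord_inj; rewrite cpv // /Fp; move: h0 h1 h2; rewrite -!val_eqE /= => /negbTE-> /negbTE-> /negbTE->. Qed.
Lemma cm0 : cm i o0 = o1. Proof. by apply: ord_inj; rewrite cmv. Qed.
Lemma cm1 : cm i o1 = i. Proof. by apply: ord_inj; rewrite cmv. Qed.
Lemma cmi : cm i i = o0. Proof. by apply: ord_inj; rewrite cmv // /Fm eqxx; case: (nat_of_ord i) hi => [|[|]]. Qed.
Lemma cmz z : z != o0 -> z != o1 -> z != i -> cm i z = z.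
Proof. by move=> h0 h1 h2; apply: ord_inj; rewrite cmv // /Fm; move: h0 h1 h2; rewrite -!val_eqE /= => /negbTE-> /negbTE-> /negbTE->. Qed.
End Vals.
Lemma t0 : t o0 = o1. Proof. by rewrite /t tpermL. Qed.
Lemma t1 : t o1 = o0. Proof. by rewrite /t tpermR. Qed.
Lemma tz z : z != o0 -> z != o1 -> t z = z.
Proof. by move=> h0 h1; rewrite /t tpermD // eq_sym. Qed.

Lemma Gcase (a : P) : a \in G -> a = t \/ exists2 i : 'I_n, 1 < i & (a = cp i \/ a = cm i).
Proof.
rewrite /G 2!in_setU in_set1 => /orP [/eqP ->|/orP [] /imsetP [i]]; first by left.
- by rewrite inE => hi ->; right; exists i => //; left.
- by rewrite inE => hi ->; right; exists i => //; right.
Qed.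

Lemma Gt : t \in G. Proof. by rewrite !inE eqxx. Qed.
Lemma Gcp i : 1 < i -> cp i \in G.
Proof. by move=> hi; rewrite !inE; apply/orP; right; apply/orP; left; apply/imsetP; exists i; rewrite ?inE. Qed.
Lemma Gcm i : 1 < i -> cm i \in G.
Proof. by move=> hi; rewrite !inE; apply/orP; right; apply/orP; right; apply/imsetP; exists i; rewrite ?inE. Qed.

Definition idx (g : P) (z : 'I_n) := (g == cp z) || (g == cm z).

Lemma G_fix (g : P) z : g \in G -> 1 < z -> ~~ idx g z -> g z = z.
Proof.
move=> /Gcase [->|[i hi [->|->]]] hz nidx.
- by rewrite tz // eq_sym ?ne0 ?ne1.
- have hzi : z != i by apply/eqP=> e; move: nidx; rewrite /idx e eqxx.
  by rewrite cpz // eq_sym ?ne0 ?ne1.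
- have hzi : z != i by apply/eqP=> e; move: nidx; rewrite /idx e eqxx orbT.
  by rewrite cmz // eq_sym ?ne0 ?ne1.
Qed.

Lemma idx_uniq g p q : 1 < p -> 1 < q -> idx g p -> idx g q -> p = q.
Proof.
move=> hp hq /orP [/eqP->|/eqP->] /orP [/eqP e|/eqP e].
- by have := congr1 (fun f : P => f o0) e; rewrite !cp0.
- by have := congr1 (fun f : P => f o0) e; rewrite cp0 // cm0 // => ep; move: hp; rewrite ep.
- by have := congr1 (fun f : P => f o0) e; rewrite cp0 // cm0 // => ep; move: hq; rewrite -ep.
- by have := congr1 (fun f : P => f o1) e; rewrite !cm1.
Qed.

Lemma idx_moves g z : 1 < z -> idx g z -> g z != z.
Proof.
by move=> hz /orP [/eqP->|/eqP->]; [rewrite cpi // ne1 | rewrite cmi // ne0].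
Qed.

Definition C (d : P) : {set P} := [set a in G | a * d^-1 \in G].

Definition rel (d a b : P) := forall k, d (b k) = a k.

Lemma Crel d a : a \in C d -> exists2 b, b \in G & rel d a b.
Proof.
rewrite inE => /andP [ha hb]; exists (a * d^-1) => // k.
by rewrite -permM mulgKV.
Qed.

Lemma CORE d a b z : a \in G -> b \in G -> rel d a b -> 1 < z -> d z != z ->
  idx a z || idx b z.
Proof.
move=> ha hb hr hz hd.
case na: (idx a z) => //.
case nb: (idx b z) => //.
move/negbT: na => na; move/negbT: nb => nb.
by move: hd; rewrite -{1}(G_fix hb hz nb) hr (G_fix ha hz na) eqxx.
Qed.

Lemma ne0' i : 1 < i -> i != o0. Proof. by move=> h; rewrite eq_sym ne0. Qed.
Lemma ne1' i : 1 < i -> i != o1. Proof. by move=> h; rewrite eq_sym ne1. Qed.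
Lemma o10 : o1 != o0. Proof. by []. Qed.

Ltac neq := solve [ assumption | by rewrite eq_sym | by apply: ne0 | by apply: ne1
                  | by apply: ne0' | by apply: ne1' | by [] ].

Lemma relv d a b z : b \in G -> rel d a b -> 1 < z -> ~~ idx b z -> d z = a z.
Proof. by move=> hb hr hz nb; rewrite -hr (G_fix hb hz nb). Qed.

Lemma idx_other g p q : 1 < p -> 1 < q -> p != q -> idx g p -> ~~ idx g q.
Proof. by move=> hp hq hpq ip; apply/negP => iq; move/eqP: hpq; apply; apply: idx_uniq ip iq. Qed.

Lemma twoidx d a b p q : a \in G -> b \in G -> rel d a b -> 1 < p -> 1 < q -> p != q ->
  d p != p -> d q != q -> (idx a p && idx b q) || (idx a q && idx b p).
Proof.
move=> ha hb hr hp hq hpq dp dq.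
have := CORE ha hb hr hp dp; have := CORE ha hb hr hq dq.
have hqp : q != p by rewrite eq_sym.
case/orP=> [aq|bq]; case/orP=> [ap|bp].
- by move: (idx_other hp hq hpq ap); rewrite aq.
- by rewrite aq bp orbT.
- by rewrite ap bq.
- by move: (idx_other hp hq hpq bp); rewrite bq.
Qed.

Lemma idx_val a p : 1 < p -> idx a p -> (a == cp p) && (a p == o1) || (a == cm p) && (a p == o0).
Proof. by move=> hp /orP [/eqP->|/eqP->]; rewrite ?cpi ?cmi // eqxx // orbT. Qed.

Lemma TWO d a p q : 1 < p -> 1 < q -> p != q -> d p != p -> d q != q -> a \in C d ->
  [|| (a == cp p) && (d p == o1), (a == cm p) && (d p == o0),
      (a == cp q) && (d q == o1) | (a == cm q) && (d q == o0)].
Proof.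
move=> hp hq hpq dp dq /[dup] hC /Crel [b hb hr].
have ha : a \in G by move: hC; rewrite inE => /andP [].
have hqp : q != p by rewrite eq_sym.
case/orP: (twoidx ha hb hr hp hq hpq dp dq) => /andP [ia ib].
- rewrite (relv hb hr hp (idx_other hq hp hqp ib)).
  by case/orP: (idx_val hp ia) => /andP [-> ->]; rewrite ?orbT.
- rewrite (relv hb hr hq (idx_other hp hq hpq ib)).
  by case/orP: (idx_val hq ia) => /andP [-> ->]; rewrite ?orbT.
Qed.

Lemma GGa e a p q r : a \in C e -> 1 < p -> 1 < q -> 1 < r -> p != q -> p != r -> q != r ->
  e p != p -> e q != q -> e r != r -> False.
Proof.
move=> /[dup] hC /Crel [b hb hr] hp hq hr' pq pr qr ep eq er.
have ha : a \in G by move: hC; rewrite inE => /andP [].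
have rq : r != q by rewrite eq_sym.
case/orP: (twoidx ha hb hr hp hq pq ep eq) => /andP [ia ib].
- case/orP: (CORE ha hb hr hr' er) => ir.
  + by move: (idx_other hp hr' pr ia); rewrite ir.
  + by move: (idx_other hq hr' qr ib); rewrite ir.
- case/orP: (CORE ha hb hr hr' er) => ir.
  + by move: (idx_other hq hr' qr ia); rewrite ir.
  + by move: (idx_other hp hr' pr ib); rewrite ir.
Qed.

Lemma GGb e a p q : a \in C e -> 1 < p -> 1 < q -> p != q -> e p != p -> e q != q ->
  (e o0 != o1) && (e o1 != o0).
Proof.
move=> /[dup] hC /Crel [b hb hr] hp hq pq ep eq.
have ha : a \in G by move: hC; rewrite inE => /andP [].
have key : forall s r, 1 < s -> 1 < r -> s != r -> idx a s -> idx b r ->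
    (e o0 != o1) && (e o1 != o0).
  move=> s r hs hr' sr ia ib.
  have rs : r != s by rewrite eq_sym.
  have ars : a r = r.
    by apply: (G_fix ha hr'); apply: idx_other ia.
  case/orP: ib => /eqP bE; rewrite bE in hr.
  - have e0 : e o0 = a o1 by rewrite -(hr o1) cp1.
    have e1 : e o1 = a r by rewrite -(hr r) cpi.
    rewrite e0 e1 ars; case/orP: ia => /eqP ->; rewrite ?cp1 ?cm1 //; apply/andP; split; neq.
  - have e0 : e o0 = a r by rewrite -(hr r) (cmi hr').
    have e1 : e o1 = a o0 by rewrite -(hr o0) cm0.
    rewrite e0 e1 ars; case/orP: ia => /eqP ->; rewrite ?cp0 ?cm0 //; apply/andP; split; neq.
case/orP: (twoidx ha hb hr hp hq pq ep eq) => /andP [ia ib].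
- exact: key ia ib.
- by apply: key ia ib; rewrite // eq_sym.
Qed.

Lemma Cintro d a b : a \in G -> b \in G -> (forall z, d (b z) = a z) -> a \in C d.
Proof.
move=> ha hb h; have E : a = b * d by apply/permP => z; rewrite permM h.
by rewrite inE ha E mulgK.
Qed.

Lemma Gno0 g : g \in G -> g o0 != o0.
Proof. by case/Gcase=> [->|[i hi [->|->]]]; rewrite ?t0 ?cp0 ?cm0 //; neq. Qed.

Lemma G0r g r : g \in G -> 1 < r -> g o0 = r -> g = cp r.
Proof.
case/Gcase=> [->|[i hi [->|->]]] hr; rewrite ?t0 ?cp0 ?cm0 //.
- by move=> e; move: hr; rewrite -e.
- by move=> ->.
- by move=> e; move: hr; rewrite -e.
Qed.

Lemma G01 g : g \in G -> g o0 = o1 -> g = t \/ exists2 s : 'I_n, 1 < s & g = cm s.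
Proof.
case/Gcase=> [->|[i hi [->|->]]]; rewrite ?t0 ?cp0 ?cm0 //.
- by left.
- by move=> e; move: hi; rewrite e.
- by move=> _; right; exists i.
Qed.

Lemma zcases p q z : [\/ z = o0, z = o1, z = p | z = q \/ [/\ 1 < z, z != p & z != q]].
Proof.
case: (eqVneq z o0) => [->|h0]; first by constructor 1.
case: (eqVneq z o1) => [->|h1]; first by constructor 2.
case: (eqVneq z p) => [->|hp]; first by constructor 3.
case: (eqVneq z q) => [->|hq]; first by constructor 4; left.
by constructor 4; right; split => //; apply: ltn2.
Qed.

Definition T0s d p := [/\ d o0 = p, d p = o0, d o1 = o1 & forall z, 1 < z -> z != p -> d z = z].
Definition T1s d p := [/\ d o1 = p, d p = o1, d o0 = o0 & forall z, 1 < z -> z != p -> d z = z].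
Definition Qs d i j := [/\ d o0 = i, d i = o0, d o1 = j, d j = o1 &
                            forall z, 1 < z -> z != i -> z != j -> d z = z].

Lemma T0mem d p : 1 < p -> T0s d p -> (t \in C d) && (cm p \in C d).
Proof.
move=> hp [h0 hpp h1 hz]; apply/andP; split.
- apply: (Cintro (b := cm p)); rewrite ?Gt ?Gcm // => z.
  case: (zcases p p z) => [->|->|->|[->|[z1 zp _]]].
  + by rewrite (cm0 hp) h1 t0.
  + by rewrite (cm1 hp) hpp t1.
  + by rewrite (cmi hp) h0 tz //; neq.
  + by rewrite (cmi hp) h0 tz //; neq.
  + by rewrite cmz // ?hz // ?tz //; neq.
- apply: (Cintro (b := t)); rewrite ?Gt ?Gcm // => z.
  case: (zcases p p z) => [->|->|->|[->|[z1 zp _]]].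
  + by rewrite t0 h1 (cm0 hp).
  + by rewrite t1 h0 (cm1 hp).
  + by rewrite tz ?hpp ?(cmi hp) //; neq.
  + by rewrite tz ?hpp ?(cmi hp) //; neq.
  + by rewrite tz ?hz ?cmz //; neq.
Qed.

Lemma T1mem d p : 1 < p -> T1s d p -> (t \in C d) && (cp p \in C d).
Proof.
move=> hp [h1 hpp h0 hz]; apply/andP; split.
- apply: (Cintro (b := cp p)); rewrite ?Gt ?Gcp // => z.
  case: (zcases p p z) => [->|->|->|[->|[z1 zp _]]].
  + by rewrite (cp0 hp) hpp t0.
  + by rewrite (cp1 hp) h0 t1.
  + by rewrite (cpi hp) h1 tz //; neq.
  + by rewrite (cpi hp) h1 tz //; neq.
  + by rewrite cpz // ?hz // ?tz //; neq.
- apply: (Cintro (b := t)); rewrite ?Gt ?Gcp // => z.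
  case: (zcases p p z) => [->|->|->|[->|[z1 zp _]]].
  + by rewrite t0 h1 (cp0 hp).
  + by rewrite t1 h0 (cp1 hp).
  + by rewrite tz ?hpp ?(cpi hp) //; neq.
  + by rewrite tz ?hpp ?(cpi hp) //; neq.
  + by rewrite tz ?hz ?cpz //; neq.
Qed.

Lemma Qmem d i j : 1 < i -> 1 < j -> i != j -> Qs d i j -> (cm i \in C d) && (cp j \in C d).
Proof.
move=> hi hj ij [h0 hii h1 hjj hz]; have ji : j != i by rewrite eq_sym.
apply/andP; split.
- apply: (Cintro (b := cp j)); rewrite ?Gcp ?Gcm // => z.
  case: (zcases i j z) => [->|->|->|[->|[z1 zi zj]]].
  + by rewrite (cp0 hj) hjj (cm0 hi).
  + by rewrite (cp1 hj) h0 (cm1 hi).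
  + by rewrite cpz ?hii ?(cmi hi) //; neq.
  + by rewrite (cpi hj) h1 cmz //; neq.
  + by rewrite cpz ?hz ?cmz //; neq.
- apply: (Cintro (b := cm i)); rewrite ?Gcp ?Gcm // => z.
  case: (zcases i j z) => [->|->|->|[->|[z1 zi zj]]].
  + by rewrite (cm0 hi) h1 (cp0 hj).
  + by rewrite (cm1 hi) hii (cp1 hj).
  + by rewrite (cmi hi) h0 cpz //; neq.
  + by rewrite cmz ?hjj ?(cpi hj) //; neq.
  + by rewrite cmz ?hz ?cpz //; neq.
Qed.

Lemma T0sub d p : 1 < p -> T0s d p -> C d \subset [set t; cm p].
Proof.
move=> hp [h0 hpp h1 hz]; apply/subsetP => a hC.
have ha : a \in G by move: hC; rewrite inE => /andP [].
case: (Crel hC) => b hb hr.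
case/Gcase: ha => [->|[r hr' [E|E]]]; first by rewrite !inE eqxx.
- have := hr o0; rewrite E (cp0 hr') => e.
  case: (eqVneq r p) => [rp|rp].
  + by move: e; rewrite rp -h0 => /perm_inj e; move: (Gno0 hb); rewrite e eqxx.
  + have bo : b o0 = r by apply: (@perm_inj _ d); rewrite e hz.
    have bE := G0r hb hr' bo.
    have := hr o1; rewrite bE E (cp1 hr') h0 => e2; move: hp; by rewrite e2.
- have := hr o0; rewrite E (cm0 hr') -h1 => /perm_inj bo.
  case: (G01 hb bo) => [bE|[s hs bE]].
  + have := hr o1; rewrite bE t1 E (cm1 hr') h0 => rp.
    by rewrite !inE rp eqxx orbT.
  + have := hr o1; rewrite bE E (cm1 hs) (cm1 hr') => e.
    case: (eqVneq s p) => [sp|sp].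
    * by move: e; rewrite sp hpp => e; move: hr'; rewrite -e.
    * move: e; rewrite hz // => sr; rewrite sr in bE.
      have := hr r; rewrite bE E (cmi hr') h0 => e; move: hp; by rewrite e.
Qed.

Lemma T1sub d p : 1 < p -> T1s d p -> C d \subset [set t; cp p].
Proof.
move=> hp [h1 hpp h0 hz]; apply/subsetP => a hC.
have ha : a \in G by move: hC; rewrite inE => /andP [].
case: (Crel hC) => b hb hr.
case/Gcase: ha => [->|[r hr' [E|E]]]; first by rewrite !inE eqxx.
- case: (eqVneq r p) => [rp|rp]; first by rewrite !inE E rp eqxx orbT.
  have := hr o0; rewrite E (cp0 hr') => e.
  have bo : b o0 = r by apply: (@perm_inj _ d); rewrite e hz.
  have bE := G0r hb hr' bo.
  have := hr r; rewrite bE E (cpi hr') h1 => e2; move: hp; by rewrite e2.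
- have := hr o0; rewrite E (cm0 hr') -hpp => /perm_inj bo.
  have bE := G0r hb hp bo.
  have := hr o1; rewrite bE E (cm1 hr') (cp1 hp) h0 => e; move: hr'; by rewrite -e.
Qed.

Lemma cm_idx i j : 1 < i -> 1 < j -> idx (cm i) j -> i = j.
Proof. move=> hi hj h; apply: (@idx_uniq (cm i)) => //; by rewrite /idx eqxx orbT. Qed.
Lemma cp_idx i j : 1 < i -> 1 < j -> idx (cp i) j -> i = j.
Proof. move=> hi hj h; apply: (@idx_uniq (cp i)) => //; by rewrite /idx eqxx. Qed.

Lemma Qspec d i j : 1 < i -> 1 < j -> i != j -> d i = o0 -> d j = o1 -> cm i \in C d -> Qs d i j.
Proof.
move=> hi hj ij di dj hC; case: (Crel hC) => b hb hr.
have ji : j != i by rewrite eq_sym.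
have dj' : d j != j by rewrite dj; neq.
case/orP: (CORE (Gcm hi) hb hr hj dj') => [/(cm_idx hi hj) e|].
  by move: ij; rewrite e eqxx.
case/orP => /eqP bE; rewrite bE in hr.
- have e0 := hr o1; rewrite (cp1 hj) (cm1 hi) in e0.
  have e1 := hr j; rewrite (cpi hj) cmz in e1; try neq.
  split => //.
  move=> z hz zi zj; have := hr z; rewrite cpz ?cmz //; neq.
- have := hr o0; rewrite (cm0 hj) (cm0 hi) => e.
  by move: dj; rewrite -e => /perm_inj e'; move: hj; rewrite e'.
Qed.

Lemma three p (y : 'I_n) : ~~ ((1 < y) && (y != p)) -> [\/ y = o0, y = o1 | y = p].
Proof.
case: y => [[|[|y]] hy] /=.
- by constructor 1; apply: ord_inj.
- by constructor 2; apply: ord_inj.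
- by move/negPn/eqP => <-; constructor 3.
Qed.

Lemma img3 d p (x : 'I_n) : (forall z, 1 < z -> z != p -> d z = z) ->
  [\/ x = o0, x = o1 | x = p] -> [\/ d x = o0, d x = o1 | d x = p].
Proof.
move=> hz hx; apply: three; apply/negP => /andP [h1 h2].
have := hz _ h1 h2; rewrite -{2}[d x]/(d x) => /perm_inj e.
case: hx => ex; move: h1 h2; rewrite e ex //.
by rewrite eqxx.
Qed.

Lemma inj2 d (x y v : 'I_n) : d x = v -> d y = v -> x != y -> False.
Proof. by move=> ex ey; rewrite -ey in ex; move/perm_inj: ex => ->; rewrite eqxx. Qed.

Lemma ext3 d g p : d o0 = g o0 -> d o1 = g o1 -> d p = g p ->
  (forall z, 1 < z -> z != p -> d z = z) -> (forall z, 1 < z -> z != p -> g z = z) -> d = g.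
Proof.
move=> e0 e1 ep hd hg; apply/permP => z.
by case: (zcases p p z) => [->|->|->|[->|[z1 zp _]]] //; rewrite hd ?hg.
Qed.

Lemma Dp d p : d \notin G -> d != 1 -> 1 < p -> d p != p ->
  (forall z, 1 < z -> z != p -> d z = z) -> T0s d p \/ T1s d p.
Proof.
move=> nG n1 hp dp hz.
have I0 := img3 hz (Or31 _ _ (erefl o0)).
have I1 := img3 hz (Or32 _ _ (erefl o1)).
have Ip := img3 hz (Or33 _ _ (erefl p)).
case: I0 => e0; case: I1 => e1; case: Ip => ep;
  try (by move: dp; rewrite ep eqxx);
  try (by exfalso; apply: (inj2 e0 e1); neq);
  try (by exfalso; apply: (inj2 e0 ep); neq);
  try (by exfalso; apply: (inj2 e1 ep); neq).
all: first [ by left; split | by right; split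
           | (have E : d = cm p by apply: (@ext3 _ _ p) => //; rewrite ?(cm0 hp) ?(cm1 hp) ?(cmi hp) //;
                move=> z z1 zp; rewrite cmz //; neq);
             by move: nG; rewrite E Gcm
           | (have E : d = cp p by apply: (@ext3 _ _ p) => //; rewrite ?(cp0 hp) ?(cp1 hp) ?(cpi hp) //;
                move=> z z1 zp; rewrite cpz //; neq);
             by move: nG; rewrite E Gcp ].
Qed.

Lemma two (y : 'I_n) : ~~ (1 < y) -> y = o0 \/ y = o1.
Proof. by case: y => [[|[|y]] hy] //= _; [left|right]; apply: ord_inj. Qed.

Lemma nomove d : (forall z, 1 < z -> d z = z) -> d = 1 \/ d = t.
Proof.
move=> hz.
have img : forall x : 'I_n, x = o0 \/ x = o1 -> d x = o0 \/ d x = o1.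
  move=> x hx; apply: two; apply/negP => h.
  have := hz _ h; rewrite -{2}[d x]/(d x) => /perm_inj e.
  by case: hx => ex; move: h; rewrite e ex.
have ext : forall g, d o0 = g o0 -> d o1 = g o1 -> (forall z, 1 < z -> g z = z) -> d = g.
  move=> g e0 e1 hg; apply/permP => z.
  case: (eqVneq z o0) => [->|h0] //; case: (eqVneq z o1) => [->|h1] //.
  by rewrite hz ?hg //; apply: ltn2.
case: (img o0 (or_introl erefl)) => e0; case: (img o1 (or_intror erefl)) => e1;
  try (by exfalso; apply: (inj2 e0 e1)).
- by left; apply: ext; rewrite ?perm1 // => z _; rewrite perm1.
- by right; apply: ext; rewrite ?t0 ?t1 // => z z1; rewrite tz //; neq.
Qed.

Definition Spec d := [\/ exists2 p : 'I_n, 1 < p & T0s d p, exists2 p : 'I_n, 1 < p & T1s d p |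
  exists i j : 'I_n, [/\ 1 < i, 1 < j, i != j & Qs d i j]].

Lemma Cclass d : d \notin G -> d != 1 -> #|C d| <= 2 /\ (1 < #|C d| -> Spec d).
Proof.
move=> nG n1.
case: (pickP [pred z : 'I_n | (1 < z) && (d z != z)]) => [p /andP [hp dp] | nom]; last first.
  have : forall z, 1 < z -> d z = z.
    by move=> z hz; have := nom z; rewrite /= hz /= => /negbFE/eqP.
  by case/nomove => E; move: nG n1; rewrite E ?Gt ?eqxx.
case: (pickP [pred z : 'I_n | [&& 1 < z, z != p & d z != z]]) => [q /and3P [hq qp dq] | noq].
- have pq : p != q by rewrite eq_sym.
  set x1 := if d p == o1 then cp p else cm p.
  set x2 := if d q == o1 then cp q else cm q.
  have sub : C d \subset [set x1; x2].
    apply/subsetP => a ha; rewrite !inE.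
    case/or4P: (TWO hp hq pq dp dq ha) => /andP [/eqP -> /eqP e]; rewrite /x1 /x2 e ?eqxx ?(negbTE o01) ?(negbTE o10) /= ?eqxx ?orbT //.
  split; first by apply: (leq_trans (subset_leq_card sub)); rewrite cards2; case: (_ != _).
  case/card_gt1P => a1 [a2 [h1 h2 h12]].
  have hx : (x1 \in C d) && (x2 \in C d).
    move/subsetP: sub => sub.
    move: (sub _ h1) (sub _ h2); rewrite !in_set2.
    case/orP=> /eqP e1; case/orP=> /eqP e2; move: h12 h1 h2; rewrite e1 e2 => A B D;
    rewrite ?B ?D //; by rewrite eqxx in A.
  case/andP: hx => hx1 hx2.
  have hx1i : idx x1 p by rewrite /x1; case: (d p == o1); rewrite /idx eqxx ?orbT.
  have hx2i : idx x2 q by rewrite /x2; case: (d q == o1); rewrite /idx eqxx ?orbT.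
  have vp : (d p == o1) || (d p == o0).
    case/or4P: (TWO hp hq pq dp dq hx1) => /andP [/eqP e f]; rewrite ?f ?orbT //;
    exfalso; move/eqP: pq; apply; apply: (idx_uniq hp hq hx1i); by rewrite /idx e eqxx ?orbT.
  have qp' : q != p by rewrite eq_sym.
  have vq : (d q == o1) || (d q == o0).
    case/or4P: (TWO hp hq pq dp dq hx2) => /andP [/eqP e f]; rewrite ?f ?orbT //;
    exfalso; move/eqP: qp'; apply; apply: (idx_uniq hq hp hx2i); by rewrite /idx e eqxx ?orbT.
  case/orP: vp => /eqP ep; case/orP: vq => /eqP eq';
    try (by exfalso; apply: (inj2 ep eq')).
  + constructor 3; exists q, p; split => //; apply: Qspec => //.
    by move: hx2; rewrite /x2 eq' (negbTE o01).
  + constructor 3; exists p, q; split => //; apply: Qspec => //.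
    by move: hx1; rewrite /x1 ep (negbTE o01).
- have hz : forall z, 1 < z -> z != p -> d z = z.
    by move=> z hz zp; have := noq z; rewrite /= hz zp /= => /negbFE/eqP.
  case: (Dp nG n1 hp dp hz) => [h|h].
  + split; first by apply: (leq_trans (subset_leq_card (T0sub hp h))); rewrite cards2; case: (_ != _).
    by move=> _; constructor 1; exists p.
  + split; first by apply: (leq_trans (subset_leq_card (T1sub hp h))); rewrite cards2; case: (_ != _).
    by move=> _; constructor 2; exists p.
Qed.

Lemma mv x v z : ((x * v^-1) z != z) = (x z != v z).
Proof. by rewrite permM -(inj_eq (@perm_inj _ v)) permKV. Qed.
Lemma eE x v z (w : 'I_n) : ((x * v^-1) z == w) = (x z == v w).
Proof. by rewrite permM -(inj_eq (@perm_inj _ v)) permKV. Qed.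

Lemma L2g v x a : Spec v -> Spec x -> a \in C (x * v^-1) ->
  exists2 g, g \in C v & g \in C x.
Proof.
move=> sv sx hC.
have GA := fun p q r => @GGa _ a p q r hC.
have GB := fun p q => @GGb _ a p q hC.
case: sv => [[i hi [v0 vi v1 vz]]|[i hi [v1 vi v0 vz]]|[i [j [hi hj ij [v0 vi v1 vj vz]]]]];
case: sx => [[k hk [x0 xk x1 xz]]|[k hk [x1 xk x0 xz]]|[k [l [hk hl kl [x0 xk x1 xl xz]]]]].
- have /andP [A _] := T0mem hi (And4 v0 vi v1 vz).
  have /andP [B _] := T0mem hk (And4 x0 xk x1 xz). by exists t.
- have /andP [A _] := T0mem hi (And4 v0 vi v1 vz).
  have /andP [B _] := T1mem hk (And4 x1 xk x0 xz). by exists t.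
- case: (eqVneq k i) => [ki|ki].
    move: hk kl x0 xk xz; rewrite {}ki => hk kl x0 xk xz; have /andP [_ A] := T0mem hi (And4 v0 vi v1 vz).
    have /andP [B _] := Qmem hk hl kl (And5 x0 xk x1 xl xz). by exists (cm i).
  exfalso; case: (eqVneq l i) => [li|li].
  + move: hl kl x1 xl xz; rewrite {}li => hl kl x1 xl xz.
    have m1 : (x * v^-1) i != i by rewrite mv xl vi.
    have m2 : (x * v^-1) k != k by rewrite mv xk vz //; neq.
    have ik : i != k by rewrite eq_sym.
    case/andP: (GB i k hi hk ik m1 m2) => _.
    by rewrite eE x1 v0 eqxx.
  + have m1 : (x * v^-1) i != i by rewrite mv xz ?vi //; neq.
    have m2 : (x * v^-1) k != k by rewrite mv xk vz //; neq.
    have m3 : (x * v^-1) l != l by rewrite mv xl vz //; neq.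
    apply: (GA i k l hi hk hl) m1 m2 m3; neq.
- have /andP [A _] := T1mem hi (And4 v1 vi v0 vz).
  have /andP [B _] := T0mem hk (And4 x0 xk x1 xz). by exists t.
- have /andP [A _] := T1mem hi (And4 v1 vi v0 vz).
  have /andP [B _] := T1mem hk (And4 x1 xk x0 xz). by exists t.
- case: (eqVneq l i) => [li|li].
    move: hl kl x1 xl xz; rewrite {}li => hl kl x1 xl xz; have /andP [_ A] := T1mem hi (And4 v1 vi v0 vz).
    have /andP [_ B] := Qmem hk hl kl (And5 x0 xk x1 xl xz). by exists (cp i).
  exfalso; case: (eqVneq k i) => [ki|ki].
  + move: hk kl x0 xk xz; rewrite {}ki => hk kl x0 xk xz.
    have m1 : (x * v^-1) i != i by rewrite mv xk vi.
    have m2 : (x * v^-1) l != l by rewrite mv xl vz //; neq.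
    have il : i != l by rewrite eq_sym.
    case/andP: (GB i l hi hl il m1 m2) => A _.
    by move: A; rewrite eE x0 v1 eqxx.
  + have m1 : (x * v^-1) i != i by rewrite mv xz ?vi //; neq.
    have m2 : (x * v^-1) k != k by rewrite mv xk vz //; neq.
    have m3 : (x * v^-1) l != l by rewrite mv xl vz //; neq.
    apply: (GA i k l hi hk hl) m1 m2 m3; neq.
- case: (eqVneq k i) => [ki|ki].
    move: hk x0 xk xz; rewrite {}ki => hk x0 xk xz; have /andP [A _] := Qmem hi hj ij (And5 v0 vi v1 vj vz).
    have /andP [_ B] := T0mem hk (And4 x0 xk x1 xz). by exists (cm i).
  exfalso; case: (eqVneq k j) => [kj|kj].
  + move: hk x0 xk xz; rewrite {}kj => hk x0 xk xz.
    have m1 : (x * v^-1) i != i by rewrite mv xz ?vi //; neq.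
    have m2 : (x * v^-1) j != j by rewrite mv xk vj.
    case/andP: (GB i j hi hj ij m1 m2) => A _.
    by move: A; rewrite eE x0 v1 eqxx.
  + have m1 : (x * v^-1) i != i by rewrite mv xz ?vi //; neq.
    have m2 : (x * v^-1) j != j by rewrite mv xz ?vj //; neq.
    have m3 : (x * v^-1) k != k by rewrite mv xk vz //; neq.
    apply: (GA i j k hi hj hk) m1 m2 m3; neq.
- case: (eqVneq k j) => [kj|kj].
    move: hk x1 xk xz; rewrite {}kj => hk x1 xk xz; have /andP [_ A] := Qmem hi hj ij (And5 v0 vi v1 vj vz).
    have /andP [_ B] := T1mem hk (And4 x1 xk x0 xz). by exists (cp j).
  exfalso; case: (eqVneq k i) => [ki|ki].
  + move: hk x1 xk xz; rewrite {}ki => hk x1 xk xz.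
    have m1 : (x * v^-1) i != i by rewrite mv xk vi.
    have m2 : (x * v^-1) j != j by rewrite mv xz ?vj //; neq.
    case/andP: (GB i j hi hj ij m1 m2) => _.
    by rewrite eE x1 v0 eqxx.
  + have m1 : (x * v^-1) i != i by rewrite mv xz ?vi //; neq.
    have m2 : (x * v^-1) j != j by rewrite mv xz ?vj //; neq.
    have m3 : (x * v^-1) k != k by rewrite mv xk vz //; neq.
    apply: (GA i j k hi hj hk) m1 m2 m3; neq.
- case: (eqVneq k i) => [ki|ki].
    move: hk kl x0 xk xz; rewrite {}ki => hk kl x0 xk xz; have /andP [A _] := Qmem hi hj ij (And5 v0 vi v1 vj vz).
    have /andP [B _] := Qmem hk hl kl (And5 x0 xk x1 xl xz). by exists (cm i).
  case: (eqVneq l j) => [lj|lj].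
    move: hl kl x1 xl xz; rewrite {}lj => hl kl x1 xl xz; have /andP [_ A] := Qmem hi hj ij (And5 v0 vi v1 vj vz).
    have /andP [_ B] := Qmem hk hl kl (And5 x0 xk x1 xl xz). by exists (cp j).
  exfalso; case: (eqVneq l i) => [li|li].
  + move: hl kl x1 xl xz; rewrite {}li => hl kl x1 xl xz; case: (eqVneq k j) => [kj|kj].
    * move: hk kl x0 xk xz; rewrite {}kj => hk kl x0 xk xz.
      have m1 : (x * v^-1) i != i by rewrite mv xl vi.
      have m2 : (x * v^-1) j != j by rewrite mv xk vj.
      case/andP: (GB i j hi hj ij m1 m2) => A _.
      by move: A; rewrite eE x0 v1 eqxx.
    * have m1 : (x * v^-1) j != j by rewrite mv xz ?vj //; neq.
      have m2 : (x * v^-1) k != k by rewrite mv xk vz //; neq.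
      have m3 : (x * v^-1) i != i by rewrite mv xl vi.
      apply: (GA j k i hj hk hi) m1 m2 m3; neq.
  + have m1 : (x * v^-1) i != i by rewrite mv xz ?vi //; neq.
    have m2 : (x * v^-1) k != k.
      rewrite mv xk; case: (eqVneq k j) => [->|kj]; first by rewrite vj.
      by rewrite vz //; neq.
    have m3 : (x * v^-1) l != l by rewrite mv xl vz //; neq.
    apply: (GA i k l hi hk hl) m1 m2 m3; neq.
Qed.

Lemma cpV i : (cp i)^-1 = cm i.
Proof. by rewrite /cp /cm invMg /t !tpermV. Qed.
Lemma cmV i : (cm i)^-1 = cp i.
Proof. by rewrite /cp /cm invMg /t !tpermV. Qed.
Lemma GV g : g \in G -> g^-1 \in G.
Proof.
case/Gcase => [->|[i hi [->|->]]]; first by rewrite /t tpermV -/t Gt.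
- by rewrite cpV Gcm.
- by rewrite cmV Gcp.
Qed.

Lemma samecp i j : 1 < i -> 1 < j -> i != j -> #|C (cp j * (cp i)^-1)| <= 1.
Proof.
move=> hi hj ij; set d := cp j * _.
have ji : j != i by rewrite eq_sym.
have di : d i = o0 by apply/eqP; rewrite eE cpz ?cp0 //; neq.
have dj : d j = i by apply/eqP; rewrite eE cpi ?cpi.
have mi : d i != i by rewrite di; neq.
have mj : d j != j by rewrite dj.
have sub : C d \subset [set cm i].
  apply/subsetP => a ha; rewrite inE.
  case/or4P: (TWO hi hj ij mi mj ha) => /andP [/eqP -> /eqP e] //;
  move: e; rewrite ?di ?dj => /(congr1 val) /= e'; first [ by [] | by move: hi; rewrite e' ].
by apply: leq_trans (subset_leq_card sub) _; rewrite cards1.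
Qed.

Lemma samecm i j : 1 < i -> 1 < j -> i != j -> #|C (cm j * (cm i)^-1)| <= 1.
Proof.
move=> hi hj ij; set d := cm j * _.
have ji : j != i by rewrite eq_sym.
have di : d i = o1 by apply/eqP; rewrite eE cmz ?cm1 //; neq.
have dj : d j = i by apply/eqP; rewrite eE cmi ?cmi.
have mi : d i != i by rewrite di; neq.
have mj : d j != j by rewrite dj.
have sub : C d \subset [set cp i].
  apply/subsetP => a ha; rewrite inE.
  case/or4P: (TWO hi hj ij mi mj ha) => /andP [/eqP -> /eqP e] //;
  move: e; rewrite ?di ?dj => /(congr1 val) /= e'; first [ by [] | by move: hi; rewrite e' ].
by apply: leq_trans (subset_leq_card sub) _; rewrite cards1.
Qed.

Definition ty g : nat := if g == t then 0%N else if g \in [set cp i | i in I2] then 1%N else 2%N.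

Lemma ty_t : ty t = 0%N. Proof. by rewrite /ty eqxx. Qed.
Lemma ty_cp i : 1 < i -> ty (cp i) = 1%N.
Proof.
move=> hi; rewrite /ty; case: eqP => [e|_].
  by have := congr1 (fun f : P => f o0) e; rewrite cp0 // t0 => e'; move: hi; rewrite e'.
by rewrite (_ : cp i \in _) //; apply/imsetP; exists i; rewrite ?inE.
Qed.
Lemma ty_cm i : 1 < i -> ty (cm i) = 2%N.
Proof.
move=> hi; rewrite /ty; case: eqP => [e|_].
  by have := congr1 (fun f : P => f o1) e; rewrite cm1 // t1 => e'; move: hi; rewrite e'.
case: imsetP => // [[r hr e]].
have := congr1 (fun f : P => f o0) e; rewrite cm0 // cp0 //; last by move: hr; rewrite inE.
by move=> e'; move: hr; rewrite inE -e'.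
Qed.

Lemma ty_pair x y : x \in G -> y \in G -> x != y -> 1 < #|C (y * x^-1)| -> ty x != ty y.
Proof.
move=> hx hy.
case/Gcase: hx => [->|[i hi [->|->]]]; case/Gcase: hy => [->|[j hj [->|->]]];
  rewrite ?ty_t ?ty_cp ?ty_cm //.
- by move/negP => hh; exfalso; apply: hh.
- case: (eqVneq i j) => [->|ij]; first by move/negP => hh; exfalso; apply: hh.
  by move=> _; rewrite ltnNge (samecp hi hj ij).
- case: (eqVneq i j) => [->|ij]; first by move/negP => hh; exfalso; apply: hh.
  by move=> _; rewrite ltnNge (samecm hi hj ij).
Qed.

Lemma L3g a b c d : a \in G -> b \in G -> c \in G -> d \in G ->
  a != b -> a != c -> a != d -> b != c -> b != d -> c != d ->
  1 < #|C (b * a^-1)| -> 1 < #|C (c * a^-1)| -> 1 < #|C (d * a^-1)| ->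
  1 < #|C (c * b^-1)| -> 1 < #|C (d * b^-1)| -> 1 < #|C (d * c^-1)| -> False.
Proof.
move=> ha hb hc hd ab ac ad bc bd cd h1 h2 h3 h4 h5 h6.
have := ty_pair ha hb ab h1; have := ty_pair ha hc ac h2; have := ty_pair ha hd ad h3.
have := ty_pair hb hc bc h4; have := ty_pair hb hd bd h5; have := ty_pair hc hd cd h6.
have tyle : forall g, ty g <= 2%N by move=> g; rewrite /ty; case: ifP => //; case: ifP.
move: (tyle a) (tyle b) (tyle c) (tyle d).
case: (ty a) => [|[|[|?]]]; case: (ty b) => [|[|[|?]]]; case: (ty c) => [|[|[|?]]];
  case: (ty d) => [|[|[|?]]] //.
Qed.

Definition N v : {set P} := [set w | splitstar_adj v w].
Lemma inN v w : (w \in N v) = (w * v^-1 \in G).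
Proof. by rewrite inE adjE. Qed.

Lemma N_imset v : N v = [set a * v | a in G].
Proof.
apply/setP => w; rewrite inN; apply/idP/imsetP => [h|[a ha ->]].
- by exists (w * v^-1) => //; rewrite mulgKV.
- by rewrite mulgK.
Qed.

Lemma cardN v : #|N v| = #|G|.
Proof. by rewrite N_imset card_imset //; apply: mulIg. Qed.

Lemma cardI2 : #|I2| = m.
Proof.
have E : ~: I2 = [set o0; o1].
  apply/setP => z; rewrite !inE; case: z => [[|[|z]] hz] //=.
have := cardsC I2; rewrite E cards2 card_ord o01 => h.
by apply/eqP; rewrite -(eqn_add2r 2) h addn2.
Qed.

Lemma cardG : #|G| = (2 * m).+1.
Proof.
have hA : #|[set cp i | i in I2]| = m.
  rewrite card_in_imset ?cardI2 // => i j; rewrite !inE => hi hj e.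
  by have := congr1 (fun f : P => f o0) e; rewrite !cp0.
have hB : #|[set cm i | i in I2]| = m.
  rewrite card_in_imset ?cardI2 // => i j; rewrite !inE => hi hj e.
  by have := congr1 (fun f : P => f o1) e; rewrite !cm1.
have dAB : [set cp i | i in I2] :&: [set cm i | i in I2] = set0.
  apply/setP => g; rewrite !inE; apply/negP => /andP [/imsetP [i hi ->] /imsetP [j hj e]].
  move: hi hj; rewrite !inE => hi hj.
  by move: (ty_cp hi); rewrite e ty_cm.
have tAB : t \notin [set cp i | i in I2] :|: [set cm i | i in I2].
  rewrite !inE; apply/negP => /orP [] /imsetP [i]; rewrite inE => hi e.
  - by move: (ty_cp hi); rewrite -e ty_t.
  - by move: (ty_cm hi); rewrite -e ty_t.
rewrite /G cardsU1 tAB.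
have := cardsUI [set cp i | i in I2] [set cm i | i in I2].
rewrite dAB cards0 addn0 hA hB => ->.
by rewrite add1n mul2n addnn.
Qed.

Lemma cardNv v : #|N v| = (2 * m).+1.
Proof. by rewrite cardN cardG. Qed.

Lemma NI u v : N u :&: N v = [set a * u | a in C (v * u^-1)].
Proof.
apply/setP => w; rewrite !inE !adjE; apply/andP/imsetP => [[h1 h2]|[a ha ->]].
- exists (w * u^-1); last by rewrite mulgKV.
  by rewrite inE h1 invMg invgK mulgA mulgKV.
- move: ha; rewrite inE invMg invgK mulgA => /andP [h1 h2].
  by rewrite mulgK h1.
Qed.

Lemma cardNI u v : #|N u :&: N v| = #|C (v * u^-1)|.
Proof. by rewrite NI card_imset //; apply: mulIg. Qed.

Lemma CtoN u v g : g \in C (v * u^-1) -> (g * u \in N u) && (g * u \in N v).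
Proof.
rewrite inE invMg invgK mulgA => /andP [h1 h2].
by rewrite !inN mulgK h1 h2.
Qed.

Lemma L2v u v x : u != v -> u != x -> v * u^-1 \notin G -> x * u^-1 \notin G ->
  1 < #|N u :&: N v| -> 1 < #|N u :&: N x| -> 0 < #|N v :&: N x| ->
  exists w, [/\ w \in N u, w \in N v & w \in N x].
Proof.
move=> uv ux g1 g2; rewrite !cardNI => c1 c2 /card_gt0P [a ha].
have n1 : v * u^-1 != 1 by rewrite -eq_mulgV1 eq_sym.
have n2 : x * u^-1 != 1 by rewrite -eq_mulgV1 eq_sym.
have s1 := (Cclass g1 n1).2 c1.
have s2 := (Cclass g2 n2).2 c2.
have E : x * v^-1 = (x * u^-1) * (v * u^-1)^-1 by rewrite invMg invgK mulgA mulgKV.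
rewrite E in ha.
case: (L2g s1 s2 ha) => g h1 h2.
exists (g * u); case/andP: (CtoN h1) => -> ->; by case/andP: (CtoN h2) => _ ->.
Qed.

Lemma L3v a b c d w : a != b -> a != c -> a != d -> b != c -> b != d -> c != d ->
  1 < #|N a :&: N b| -> 1 < #|N a :&: N c| -> 1 < #|N a :&: N d| ->
  1 < #|N b :&: N c| -> 1 < #|N b :&: N d| -> 1 < #|N c :&: N d| ->
  w \in N a -> w \in N b -> w \in N c -> w \in N d -> False.
Proof.
move=> ab ac ad bc bd cd; rewrite !cardNI => h1 h2 h3 h4 h5 h6.
rewrite !inN => wa wb wc wd.
have ga := GV wa; have gb := GV wb; have gc := GV wc; have gd := GV wd.
rewrite !invMg !invgK in ga gb gc gd.
have key : forall x y, (y * w^-1) * (x * w^-1)^-1 = y * x^-1.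
  by move=> x y; rewrite invMg invgK mulgA mulgKV.
have inj : forall x y, x != y -> x * w^-1 != y * w^-1.
  by move=> x y; apply: contra => /eqP /mulIg ->.
apply: (L3g ga gb gc gd); rewrite ?inj ?key //.
Qed.
End S.

From mathcomp Require Import zify.

Section Count.
Variable T : finType.
Implicit Types A B C D : {set T}.

Lemma ie3 A B C : #|A :|: B :|: C| + (#|A :&: B| + #|A :&: C| + #|B :&: C|) =
  #|A| + #|B| + #|C| + #|A :&: B :&: C|.
Proof.
have h1 := cardsUI (A :|: B) C.
have h2 := cardsUI A B.
have h3 := cardsUI (A :&: C) (B :&: C).
have e1 : (A :|: B) :&: C = (A :&: C) :|: (B :&: C).
  by apply/setP => x; rewrite !inE; do !case: (_ \in _).
have e2 : (A :&: C) :&: (B :&: C) = A :&: B :&: C.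
  by apply/setP => x; rewrite !inE; do !case: (_ \in _).
rewrite e1 e2 in h1 h3. lia.
Qed.

Lemma ie4 A B C D : #|A :|: B :|: C :|: D| +
  (#|A :&: B| + #|A :&: C| + #|A :&: D| + #|B :&: C| + #|B :&: D| + #|C :&: D|) +
  #|A :&: B :&: C :&: D| =
  #|A| + #|B| + #|C| + #|D| +
  (#|A :&: B :&: C| + #|A :&: B :&: D| + #|A :&: C :&: D| + #|B :&: C :&: D|).
Proof.
have h1 := cardsUI (A :|: B :|: C) D.
have h2 := ie3 A B C.
have h3 := ie3 (A :&: D) (B :&: D) (C :&: D).
have e1 : (A :|: B :|: C) :&: D = (A :&: D) :|: (B :&: D) :|: (C :&: D).
  by apply/setP => x; rewrite !inE; do !case: (_ \in _).
have e2 : (A :&: D) :&: (B :&: D) = A :&: B :&: D.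
  by apply/setP => x; rewrite !inE; do !case: (_ \in _).
have e3 : (A :&: D) :&: (C :&: D) = A :&: C :&: D.
  by apply/setP => x; rewrite !inE; do !case: (_ \in _).
have e4 : (B :&: D) :&: (C :&: D) = B :&: C :&: D.
  by apply/setP => x; rewrite !inE; do !case: (_ \in _).
have e5 : (A :&: D) :&: (B :&: D) :&: (C :&: D) = A :&: B :&: C :&: D.
  by apply/setP => x; rewrite !inE; do !case: (_ \in _).
rewrite e1 in h1; rewrite e5 e2 e3 e4 in h3. lia.
Qed.

Lemma card2E A : #|A| = 2 -> exists a b, a != b /\ forall p, (p \in A) = (p == a) || (p == b).
Proof.
move/eqP/cards2P => [a [b [ab ->]]]; exists a, b; split => // p; by rewrite !inE.
Qed.

Lemma card3E A : #|A| = 3 -> exists a b c, [/\ a != b, a != c, b != c &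
  forall p, (p \in A) = [|| p == a, p == b | p == c]].
Proof.
move=> h; have : 0 < #|A| by rewrite h.
case/card_gt0P => a ha.
have h2 : #|A :\ a| = 2 by move: h; rewrite (cardsD1 a) ha add1n => -[].
case: (card2E h2) => b [c [bc hm]].
have hb : b \in A :\ a by rewrite hm eqxx.
have hc : c \in A :\ a by rewrite hm eqxx orbT.
move: hb hc; rewrite !inE => /andP [ba _] /andP [ca _].
exists a, b, c; split => //; try by rewrite eq_sym.
move=> p; case: (eqVneq p a) => [->|pa] //=.
by rewrite -hm !inE pa.
Qed.

Lemma card4E A : #|A| = 4 -> exists a b c d, [/\ a != b, a != c, a != d, b != c &
  [/\ b != d, c != d & forall p, (p \in A) = [|| p == a, p == b, p == c | p == d]]].
Proof.
move=> h; have : 0 < #|A| by rewrite h.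
case/card_gt0P => a ha.
have h2 : #|A :\ a| = 3 by move: h; rewrite (cardsD1 a) ha add1n => -[].
case: (card3E h2) => b [c [d [bc bd cd hm]]].
have hb : b \in A :\ a by rewrite hm eqxx.
have hc : c \in A :\ a by rewrite hm eqxx orbT.
have hd : d \in A :\ a by rewrite hm eqxx !orbT.
move: hb hc hd; rewrite !inE => /andP [ba _] /andP [ca _] /andP [da _].
exists a, b, c, d; split => //; try by rewrite eq_sym.
split => // p; case: (eqVneq p a) => [->|pa] //=.
by rewrite -hm !inE pa.
Qed.
End Count.

Definition good (p q r : nat) : bool :=
  [|| (1 < p) && (1 < q) && (0 < r), (1 < p) && (1 < r) && (0 < q) | (1 < q) && (1 < r) && (0 < p)].
Lemma comb c1 c2 c3 c4 c5 c6 : c1 <= 2 -> c2 <= 2 -> c3 <= 2 -> c4 <= 2 -> c5 <= 2 -> c6 <= 2 ->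
  c1 + c2 + c3 + c4 + c5 + c6 <= 8 + (good c1 c2 c4 + good c1 c3 c5 + good c2 c3 c6 + good c4 c5 c6).
Proof.
by case: c1 => [|[|[|?]]] //; case: c2 => [|[|[|?]]] //; case: c3 => [|[|[|?]]] //;
   case: c4 => [|[|[|?]]] //; case: c5 => [|[|[|?]]] //; case: c6 => [|[|[|?]]].
Qed.

Lemma sum11 c1 c2 c3 c4 c5 c6 : c1 <= 2 -> c2 <= 2 -> c3 <= 2 -> c4 <= 2 -> c5 <= 2 -> c6 <= 2 ->
  (1 < c1 -> 1 < c2 -> 1 < c3 -> 1 < c4 -> 1 < c5 -> 1 < c6 -> False) ->
  c1 + c2 + c3 + c4 + c5 + c6 <= 11.
Proof.
move=> h1 h2 h3 h4 h5 h6 H.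
case: (ltnP 1 c1) => [l1|l1]; last by lia.
case: (ltnP 1 c2) => [l2|l2]; last by lia.
case: (ltnP 1 c3) => [l3|l3]; last by lia.
case: (ltnP 1 c4) => [l4|l4]; last by lia.
case: (ltnP 1 c5) => [l5|l5]; last by lia.
case: (ltnP 1 c6) => [l6|l6]; last by lia.
by case: (H l1 l2 l3 l4 l5 l6).
Qed.

Section Main.
Variable m : nat.
Local Notation n := m.+2.
Local Notation P := {perm 'I_n}.
Implicit Types (S : {set P}) (a b c d p q u v w x : P).

Lemma indep_adj S p q : independent S -> p \in S -> q \in S -> ~~ splitstar_adj p q.
Proof. by move/forall_inP => h hp hq; exact: (forall_inP (h p hp) q hq). Qed.

Lemma nbhdE S : independent S -> nbhd S = [set w | [exists p in S, splitstar_adj p w]].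
Proof.
move=> hI; apply/setP => w; rewrite !inE.
case: existsP => [[p /andP [hp hpw]]|_]; last by rewrite andbF.
rewrite andbT; apply/negP => hw; by move: (indep_adj hI hp hw); rewrite hpw.
Qed.

Lemma nadj S p q : independent S -> p \in S -> q \in S -> (q * p^-1 \notin G m)%g.
Proof. by move=> hI hp hq; rewrite -adjE; apply: indep_adj hI hp hq. Qed.

Lemma cle2 u v : u != v -> (v * u^-1 \notin G m)%g -> #|N u :&: N v| <= 2.
Proof.
move=> uv hg; rewrite cardNI; apply: (Cclass hg _).1.
by rewrite -eq_mulgV1 eq_sym.
Qed.

Lemma inNE v w : (w \in N v) = splitstar_adj v w.
Proof. by rewrite inE. Qed.

Lemma cardIC u v : #|N u :&: N v| = #|N v :&: N u|.
Proof. by rewrite setIC. Qed.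

Lemma L2t u v x (Tr : {set P}) : u != v -> u != x -> (v * u^-1 \notin G m)%g -> (x * u^-1 \notin G m)%g ->
  1 < #|N u :&: N v| -> 1 < #|N u :&: N x| -> 0 < #|N v :&: N x| ->
  (forall w, w \in N u -> w \in N v -> w \in N x -> w \in Tr) -> 0 < #|Tr|.
Proof.
move=> uv ux g1 g2 h1 h2 h3 hT.
case: (L2v uv ux g1 g2 h1 h2 h3) => w [w1 w2 w3].
by apply/card_gt0P; exists w; apply: hT.
Qed.

Lemma Gtri u v x : u != v -> u != x -> v != x ->
  (v * u^-1 \notin G m)%g -> (x * u^-1 \notin G m)%g -> (u * v^-1 \notin G m)%g ->
  (x * v^-1 \notin G m)%g -> (u * x^-1 \notin G m)%g -> (v * x^-1 \notin G m)%g ->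
  (good #|N u :&: N v| #|N u :&: N x| #|N v :&: N x| : nat) <= #|N u :&: N v :&: N x|.
Proof.
move=> uv ux vx g1 g2 g3 g4 g5 g6.
have vu : v != u by rewrite eq_sym.
have xu : x != u by rewrite eq_sym.
have xv : x != v by rewrite eq_sym.
case: (boolP (good _ _ _)) => [|_]; last exact: leq0n.
case/or3P => /andP [/andP [h1 h2] h3].
- apply: (L2t uv ux g1 g2 h1 h2 h3) => w w1 w2 w3; by rewrite !in_setI w1 w2 w3.
- rewrite cardIC in h1.
  apply: (L2t vu vx g3 g4 h1 h2 h3) => w w1 w2 w3; by rewrite !in_setI w1 w2 w3.
- rewrite cardIC in h1; rewrite cardIC in h2.
  apply: (L2t xu xv g5 g6 h1 h2 h3) => w w1 w2 w3; by rewrite !in_setI w1 w2 w3.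
Qed.

Ltac canon := first [ assumption | by rewrite cardIC ].
Ltac memb := let w := fresh "w" in let h1 := fresh "h" in let h2 := fresh "h" in let h3 := fresh "h" in
  move=> w h1 h2 h3; rewrite !in_setI ?h1 ?h2 ?h3.

Lemma main S : 2 <= m -> independent S ->
  [/\ #|S| = 2 -> 4 * n - 8 <= #|nbhd S|,
      #|S| = 3 -> 6 * n - 14 <= #|nbhd S|
    & #|S| = 4 -> 8 * n - 20 <= #|nbhd S|].
Proof.
move=> hm hI.
have hN := fun p q => @nadj S p q hI.
split.
- case/card2E => a [b [ab hm']].
  have ha : a \in S by rewrite hm' eqxx.
  have hb : b \in S by rewrite hm' eqxx orbT.
  have E : nbhd S = N a :|: N b.
    apply/setP => w; rewrite nbhdE // in_set !in_setU !inNE; apply/existsP/orP.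
    + by case=> p /andP []; rewrite hm' => /orP [] /eqP -> h; [left|right].
    + by case=> h; [exists a; rewrite ha | exists b; rewrite hb].
  rewrite E; have := cardsUI (N a) (N b); rewrite !cardNv.
  have := cle2 ab (hN _ _ ha hb). clear; lia.
- case/card3E => a [b [c [ab ac bc hm']]].
  have ha : a \in S by rewrite hm' eqxx.
  have hb : b \in S by rewrite hm' eqxx orbT.
  have hc : c \in S by rewrite hm' eqxx !orbT.
  have E : nbhd S = N a :|: N b :|: N c.
    apply/setP => w; rewrite nbhdE // in_set !in_setU !inNE; apply/existsP/idP.
    + by case=> p /andP []; rewrite hm' => /or3P [] /eqP -> ->; rewrite ?orbT.
    + by case/orP => [/orP [] h | h]; [exists a; rewrite ha | exists b; rewrite hb | exists c; rewrite hc].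
  rewrite E; have := ie3 (N a) (N b) (N c); rewrite !cardNv.
  have := cle2 ab (hN _ _ ha hb); have := cle2 ac (hN _ _ ha hc); have := cle2 bc (hN _ _ hb hc).
  have G1 := Gtri ab ac bc (hN _ _ ha hb) (hN _ _ ha hc) (hN _ _ hb ha) (hN _ _ hb hc) (hN _ _ hc ha) (hN _ _ hc hb).
  move: G1.

  move=> G1 k3 k2 k1 IE.
  case: (ltnP 1 #|N a :&: N b|) => l1; last by clear -k2 k3 l1 IE; lia.
  case: (ltnP 1 #|N a :&: N c|) => l2; last by clear -k1 k3 l2 IE; lia.
  case: (ltnP 1 #|N b :&: N c|) => l4; last by clear -k1 k2 l4 IE; lia.
  have gt : good #|N a :&: N b| #|N a :&: N c| #|N b :&: N c| by rewrite /good l1 l2 (ltnW l4).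
  rewrite gt in G1.
  clear -G1 k1 k2 k3 IE; lia.
- case/card4E => a [b [c [d [ab ac ad bc [bd cd hm']]]]].
  have ha : a \in S by rewrite hm' eqxx.
  have hb : b \in S by rewrite hm' eqxx orbT.
  have hc : c \in S by rewrite hm' eqxx !orbT.
  have hd : d \in S by rewrite hm' eqxx !orbT.
  have ba : b != a by rewrite eq_sym.
  have ca : c != a by rewrite eq_sym.
  have da : d != a by rewrite eq_sym.
  have cb : c != b by rewrite eq_sym.
  have db : d != b by rewrite eq_sym.
  have dc : d != c by rewrite eq_sym.
  have E : nbhd S = N a :|: N b :|: N c :|: N d.
    apply/setP => w; rewrite nbhdE // in_set !in_setU !inNE; apply/existsP/idP.
    + by case=> p /andP []; rewrite hm' => /or4P [] /eqP -> ->; rewrite ?orbT.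
    + by case/orP => [/orP [/orP [] h | h] | h]; [exists a; rewrite ha | exists b; rewrite hb
                        | exists c; rewrite hc | exists d; rewrite hd].
  rewrite E; have := ie4 (N a) (N b) (N c) (N d); rewrite !cardNv.
  have := cle2 ab (hN _ _ ha hb); have := cle2 ac (hN _ _ ha hc); have := cle2 ad (hN _ _ ha hd).
  have := cle2 bc (hN _ _ hb hc); have := cle2 bd (hN _ _ hb hd); have := cle2 cd (hN _ _ hc hd).
  have q1 : #|N a :&: N b :&: N c :&: N d| <= #|N a :&: N b :&: N c|.
    by apply: subset_leq_card; apply/subsetP => w; rewrite !in_setI; do !case: (_ \in _).
  have q2 : #|N a :&: N b :&: N c :&: N d| <= #|N a :&: N b :&: N d|.
    by apply: subset_leq_card; apply/subsetP => w; rewrite !in_setI; do !case: (_ \in _).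
  have q3 : #|N a :&: N b :&: N c :&: N d| <= #|N a :&: N c :&: N d|.
    by apply: subset_leq_card; apply/subsetP => w; rewrite !in_setI; do !case: (_ \in _).
  have q4 : #|N a :&: N b :&: N c :&: N d| <= #|N b :&: N c :&: N d|.
    by apply: subset_leq_card; apply/subsetP => w; rewrite !in_setI; do !case: (_ \in _).
  have L3 : 1 < #|N a :&: N b| -> 1 < #|N a :&: N c| -> 1 < #|N a :&: N d| ->
            1 < #|N b :&: N c| -> 1 < #|N b :&: N d| -> 1 < #|N c :&: N d| ->
            #|N a :&: N b :&: N c :&: N d| = 0.
    move=> h1 h2 h3 h4 h5 h6; apply/eqP; rewrite cards_eq0; apply/eqP/setP => w.
    rewrite in_set0 !in_setI; apply/negbTE/negP => /andP [/andP [/andP [w1 w2] w3] w4].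
    exact: (L3v ab ac ad bc bd cd h1 h2 h3 h4 h5 h6 w1 w2 w3 w4).
  have G1 := Gtri ab ac bc (hN _ _ ha hb) (hN _ _ ha hc) (hN _ _ hb ha) (hN _ _ hb hc) (hN _ _ hc ha) (hN _ _ hc hb).
  have G2 := Gtri ab ad bd (hN _ _ ha hb) (hN _ _ ha hd) (hN _ _ hb ha) (hN _ _ hb hd) (hN _ _ hd ha) (hN _ _ hd hb).
  have G3 := Gtri ac ad cd (hN _ _ ha hc) (hN _ _ ha hd) (hN _ _ hc ha) (hN _ _ hc hd) (hN _ _ hd ha) (hN _ _ hd hc).
  have G4 := Gtri bc bd cd (hN _ _ hb hc) (hN _ _ hb hd) (hN _ _ hc hb) (hN _ _ hc hd) (hN _ _ hd hb) (hN _ _ hd hc).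
  move=> k6 k5 k4 k3 k2 k1 IE.
  have CB := comb k1 k2 k3 k4 k5 k6.
  move: CB G1 G2 G3 G4 L3 q1 q2 q3 q4 k1 k2 k3 k4 k5 k6 IE.




  move=> CB G1 G2 G3 G4 L3 q1 q2 q3 q4 k1 k2 k3 k4 k5 k6 IE.
  have key : #|N a :&: N b| + #|N a :&: N c| + #|N a :&: N d| + #|N b :&: N c| + #|N b :&: N d| + #|N c :&: N d|
              + #|N a :&: N b :&: N c :&: N d| <=
              8 + (#|N a :&: N b :&: N c| + #|N a :&: N b :&: N d| + #|N a :&: N c :&: N d| + #|N b :&: N c :&: N d|).
    case: (posnP #|N a :&: N b :&: N c :&: N d|) => [Q0|Qp].
    - rewrite Q0 addn0; apply: (leq_trans CB); rewrite leq_add2l.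
      by apply: leq_add; [apply: leq_add; [apply: leq_add|]|].
    - have S11 : #|N a :&: N b| + #|N a :&: N c| + #|N a :&: N d| + #|N b :&: N c| + #|N b :&: N d| + #|N c :&: N d| <= 11.
        apply: (sum11 k1 k2 k3 k4 k5 k6) => h1 h2 h3 h4 h5 h6.
        by move: Qp; rewrite (L3 h1 h2 h3 h4 h5 h6).
      clear -S11 q1 q2 q3 q4 Qp; lia.
  clear -key IE; lia.
Qed.
End Main.

Theorem lemma11 (n : nat) (S : {set {perm 'I_n}}) :
  4 <= n -> independent S ->
  [/\ #|S| = 2 -> 4 * n - 8 <= #|nbhd S|,
      #|S| = 3 -> 6 * n - 14 <= #|nbhd S|
    & #|S| = 4 -> 8 * n - 20 <= #|nbhd S|].
Proof.
move: n S => [|[|m]] S // hn.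
by apply: main.
Qed.
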